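(* Let $K$ be an oriented framed knot, $D$ an open diagram of $K$ drawn as in the context, $N\ge2$ an integer, and $\mu\in\mathbb{C}$ with $m=e^{2\pi i\mu}$. Let $(b_i)$ be a solution of the segment equations of $D$ with meridian eigenvalue $m$, with $b=1$ on the boundary segment of the closure, all $b_i\ne0$, and no shape parameter in $\{0,1,\infty\}$. Let $\beta\in\mathbb{C}^E$ with $e^{2\pi i\beta_i}=b_i$ for all $i\in E$. Then $W_{D,\mu}$ is finite at every point of $\frac{\beta}{N}+\frac1N\mathbb{Z}^E$, and for every $n\in\mathbb{Z}^E$ and every $i\in E$, $$W_{D,\mu}\!\left(\tfrac{\beta+n}{N}+e_i\right)=W_{D,\mu}\!\left(\tfrac{\beta+n}{N}\right),$$ where $e_i$ is the $i$-th standard basis vector; i.e. $W_{D,\mu}$ restricted to the lattice $\frac{\beta}{N}+\frac1N\mathbb{Z}^E$ is $\mathbb{Z}^E$-periodic.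
   Context: Open diagram, segments, crossing labels, sign and segment equations: $D$ is an oriented blackboard-framed 1-1 tangle diagram whose closure is $K$; segments are edges of the underlying 4-valent graph; the two segments meeting the boundary are boundary segments (joined into one segment in the closure); $E$ is the set of internal segments. At a crossing with both strands oriented left to right: incoming top-left $1$, incoming bottom-left $2$, outgoing bottom-right $1'$ (continuation of $1$), outgoing top-right $2'$ (continuation of $2$); sign $\epsilon=+1$ if $1\to1'$ is over, $-1$ if $2\to2'$ is over. Shape parameters: $z_{\mathrm N}=(b_{2'}/b_1)^\epsilon$, $z_{\mathrm S}=(b_2/b_{1'})^\epsilon$, $z_{\mathrm W}=(b_2/(mb_1))^\epsilon$, $z_{\mathrm E}=(mb_{2'}/b_{1'})^\epsilon$. Segment values $a_1=m^\epsilon\frac{1-z_{\mathrm W}}{1-z_{\mathrm N}}$, $a_{2'}=m^{-\epsilon}\frac{1-z_{\mathrm E}}{1-z_{\mathrm N}}$, $a_2=m^{-\epsilon}\frac{1-z_{\mathrm S}}{1-z_{\mathrm W}}$, $a_{1'}=m^{\epsilon}\frac{1-z_{\mathrm S}}{1-z_{\mathrm E}}$; the segment equations require the two values assigned to each segment of the closure (from its two end crossings) to agree. Quantum dilogarithm: for $\mathsf b>0$ let $c_{\mathsf b}=\frac i2(\mathsf b+\mathsf b^{-1})$ and $\Phi_{\mathsf b}(z)=\exp\int_{\mathbb{R}+i0}\frac{e^{-2izw}}{4\sinh(w\mathsf b)\sinh(w/\mathsf b)}\frac{dw}{w}$ for $|\operatorname{Im}z|<|\operatorname{Im}c_{\mathsf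 b}|$, extended to a meromorphic function on $\mathbb{C}$ (Faddeev's noncompact quantum dilogarithm). Set $E_N(t)=\Phi_{\sqrt N}(i\sqrt N\,t-c_{\sqrt N}+i/\sqrt N)$; it satisfies $E_N(t)=E_N(t-1/N)/(1-e^{2\pi i t})$, and its zeros and poles lie in $\frac1N\mathbb{Z}$. Crossing weights: for a positive crossing $\Lambda^+(t_1,t_2,t_{1'},t_{2'})=\dfrac{E_N(t_{2'}-t_1)\,E_N(t_2-t_{1'})}{E_N(t_2-t_1-\mu/N+1-1/N)\,E_N(t_{2'}-t_{1'}+\mu/N)}\,e^{2\pi i(1-N)(t_2-t_1-\mu/N)+2\pi i\mu(t_2+t_{1'}-t_1-t_{2'})}$; for a negative crossing $\Lambda^-(t_1,t_2,t_{1'},t_{2'})=\dfrac{E_N(t_1-t_2+\mu/N)\,E_N(t_{1'}-t_{2'}-\mu/N+1-1/N)}{E_N(t_1-t_{2'}+1-1/N)\,E_N(t_{1'}-t_2+1-1/N)}\,e^{-2\pi i(1-N)(t_2-t_1-\mu/N)-2\pi i\mu(t_2+t_{1'}-t_1-t_{2'})}$. Weight of the diagram: draw $D$ so that at every crossing both strands point left to right, with finitely many turning points (points of vertical tangent, away from crossings). A turning point that is a leftmost point traversed clockwise or a rightmost point traversed counterclockwise has shift $0$; a leftmost point traversed counterclockwise has shift $1/N-1$; a rightmost point traversed clockwise has shift $1-1/N$. Assign a variable $t_i\in\mathbb{C}$ to each $i\in E$ and $0$ to each boundary segment; this is the value at the segment's initial end, and the value at its final end is this plus the sum of the shifts of the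 turning points along the segment. At each crossing insert the values at the ends meeting it into $\Lambda^{\epsilon}$ (incoming segments $1,2$ and outgoing $1',2'$). Define the meromorphic function $W_{D,\mu}(t)=\prod_{\text{crossings}}\Lambda^{\epsilon}(\dots)$ on $\mathbb{C}^E$; it equals $\exp(N\,\mathcal S_{D,\mu}(t))$ for the action $\mathcal S_{D,\mu}=\frac1N\sum_{\text{crossings}}\log\Lambda^\epsilon$. *)

(* Defs.v *)
From Stdlib Require Import Reals List Arith ZArith.
From Coquelicot Require Import Coquelicot.
Import ListNotations.
Open Scope R_scope.

Definition Cexp (z : C) : C :=
  (exp (fst z) * cos (snd z), exp (fst z) * sin (snd z)).

Definition Csinh (w : C) : C := ((Cexp w - Cexp (- w)) / RtoC 2)%C.

Definition Cnz (z : C) : bool :=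
  if Req_EM_T (fst z) 0 then (if Req_EM_T (snd z) 0 then false else true)
  else true.

Definition Cprod (l : list C) : C := fold_right Cmult (RtoC 1) l.

Definition c_b (b : R) : C := (Ci * RtoC ((b + / b) / 2))%C.

(* The contour R + i0 passing above the pole at 0: we integrate along the
   horizontal line Im w = delta_b, with 0 < delta_b < pi*min(b,1/b), so
   that no pole of the integrand lies between R and that line. *)
Definition delta_b (b : R) : R := PI / (2 * (b + / b)).

Definition phi_integrand (b : R) (z : C) (x : R) : C :=
  let w : C := (x, delta_b b) in
  (Cexp (RtoC (-2) * Ci * z * w) /
     (RtoC 4 * Csinh (w * RtoC b) * Csinh (w / RtoC b) * w))%C.

(* Faddeev's quantum dilogarithm on the strip |Im z| < |Im c_b| *)
Definition Phi_strip (b : R) (z : C) : C :=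
  Cexp (RInt_gen (V := C_R_CompleteNormedModule) (phi_integrand b z)
          (Rbar_locally m_infty) (Rbar_locally p_infty)).

(* Meromorphic extension of Phi_b to C, with value None at poles.
   Write z = w + i k b with k an integer and Im w in [-b/2, b/2) (inside the
   strip).  The extension satisfies
     Phi_b(u - i b) = (1 + e^{2 pi b (u - i b/2)}) Phi_b(u),
   which gives the explicit continuation below.  Since Phi_b is finite and
   nonzero on the strip, the extension is the unique one. *)
Definition Phi_fac (b : R) (w : C) (j : R) : C :=
  (RtoC 1 + Cexp (RtoC (2 * PI * b) * (w + Ci * RtoC ((j - / 2) * b))))%C.

Definition Phi (b : R) (z : C) : option C :=
  let k : Z := Int_part ((snd z + b / 2) / b) in
  let w : C := (z - Ci * RtoC (IZR k * b))%C in
  if (0 <=? k)%Z then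
    let d := Cprod (map (fun j => Phi_fac b w (INR j)) (seq 1 (Z.to_nat k))) in
    if Cnz d then Some (Phi_strip b w / d)%C else None
  else
    Some (Cprod (map (fun j => Phi_fac b w (- INR j + 1))
                     (seq 1 (Z.to_nat (- k)))) * Phi_strip b w)%C.

Definition E_N (N : nat) (t : C) : option C :=
  let b := sqrt (INR N) in
  Phi b (Ci * RtoC b * t - c_b b + Ci / RtoC b)%C.

(* Segments: the incoming boundary segment, the outgoing boundary segment
   (these two are joined into one segment of the closure), and the
   internal segments SInt i, i < nE (the set E). *)
Inductive seg := SIn | SOut | SInt (i : nat).

Definition seg_eqb (s s' : seg) : bool :=
  match s, s' with
  | SIn, SIn => true
  | SOut, SOut => true
  | SInt i, SInt j => Nat.eqb i j
  | _, _ => false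
  end.

(* Turning points (points of vertical tangent) *)
Inductive turn :=
  | LeftCW
  | RightCCW
  | LeftCCW
  | RightCW.

Definition turn_shift (N : nat) (x : turn) : R :=
  match x with
  | LeftCW | RightCCW => 0
  | LeftCCW => / INR N - 1
  | RightCW => 1 - / INR N
  end.

(* A crossing with both strands oriented left to right:
   in1 = incoming top-left (1), in2 = incoming bottom-left (2),
   out1 = outgoing bottom-right (1', continuation of 1),
   out2 = outgoing top-right (2', continuation of 2);
   positive = true iff epsilon = +1 (1 -> 1' is the over strand). *)
Record crossing := mkCrossing {
  positive : bool;
  in1 : seg; in2 : seg; out1 : seg; out2 : seg }.

Record diagram := mkDiagram {
  nE : nat;                      (* E = {0, ..., nE - 1} *)
  crossings : list crossing;
  turns : seg -> list turn
}.

Definition valid_seg (D : diagram) (s : seg) : Prop :=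
  match s with SInt i => (i < nE D)%nat | _ => True end.

Definition count_in (D : diagram) (s : seg) : nat :=
  fold_right (fun c acc =>
    ((if seg_eqb (in1 c) s then 1 else 0) +
     (if seg_eqb (in2 c) s then 1 else 0) + acc)%nat) 0%nat (crossings D).

Definition count_out (D : diagram) (s : seg) : nat :=
  fold_right (fun c acc =>
    ((if seg_eqb (out1 c) s then 1 else 0) +
     (if seg_eqb (out2 c) s then 1 else 0) + acc)%nat) 0%nat (crossings D).

Fixpoint next_in (l : list crossing) (s : seg) : option seg :=
  match l with
  | [] => None
  | c :: l' =>
      if seg_eqb (in1 c) s then Some (out1 c)
      else if seg_eqb (in2 c) s then Some (out2 c)
      else next_in l' s
  end.

Fixpoint walk (D : diagram) (k : nat) (s : seg) : option seg :=
  match k with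
  | O => Some s
  | S k' => match next_in (crossings D) s with
            | Some s' => walk D k' s'
            | None => None
            end
  end.

(* Well-formedness: each segment has exactly one initial and one final end
   at crossings (boundary segments: one end each), and the strand starting
   at the boundary runs through all segments and ends at the boundary, so
   that the closure is a knot (one component). *)
Definition wf_diagram (D : diagram) : Prop :=
  (forall c, In c (crossings D) ->
     valid_seg D (in1 c) /\ valid_seg D (in2 c) /\
     valid_seg D (out1 c) /\ valid_seg D (out2 c)) /\
  count_in D SIn = 1%nat /\ count_out D SIn = 0%nat /\
  count_in D SOut = 0%nat /\ count_out D SOut = 1%nat /\
  (forall i, (i < nE D)%nat ->
     count_in D (SInt i) = 1%nat /\ count_out D (SInt i) = 1%nat) /\
  walk D (S (nE D)) SIn = Some SOut.

Definition bval (b : nat -> C) (s : seg) : C :=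
  match s with SInt i => b i | _ => RtoC 1 end.

Definition epow (pos : bool) (x : C) : C := if pos then x else (/ x)%C.

Section Shapes.
Variables (b : nat -> C) (m : C) (c : crossing).
Let e := positive c.
Let b1 := bval b (in1 c).
Let b2 := bval b (in2 c).
Let b1' := bval b (out1 c).
Let b2' := bval b (out2 c).
Definition zN : C := epow e (b2' / b1)%C.
Definition zS : C := epow e (b2 / b1')%C.
Definition zW : C := epow e (b2 / (m * b1))%C.
Definition zE : C := epow e (m * b2' / b1')%C.
Definition a_in1 : C := (epow e m * (RtoC 1 - zW) / (RtoC 1 - zN))%C.
Definition a_out2 : C := (epow (negb e) m * (RtoC 1 - zE) / (RtoC 1 - zN))%C.
Definition a_in2 : C := (epow (negb e) m * (RtoC 1 - zS) / (RtoC 1 - zW))%C.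
Definition a_out1 : C := (epow e m * (RtoC 1 - zS) / (RtoC 1 - zE))%C.
End Shapes.

(* an incoming end of segment s and an outgoing end of segment s' belong to
   the same segment of the closure *)
Definition same_closure_seg (s_in s_out : seg) : Prop :=
  match s_in, s_out with
  | SInt i, SInt j => i = j
  | SIn, SOut => True
  | _, _ => False
  end.

Definition segment_equations (D : diagram) (b : nat -> C) (m : C) : Prop :=
  forall c c', In c (crossings D) -> In c' (crossings D) ->
    (same_closure_seg (in1 c) (out1 c') -> a_in1 b m c = a_out1 b m c') /\
    (same_closure_seg (in1 c) (out2 c') -> a_in1 b m c = a_out2 b m c') /\
    (same_closure_seg (in2 c) (out1 c') -> a_in2 b m c = a_out1 b m c') /\
    (same_closure_seg (in2 c) (out2 c') -> a_in2 b m c = a_out2 b m c').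

(* no shape parameter in {0, 1, infinity} (they are finite since all b's
   are nonzero and m <> 0) *)
Definition shapes_nondegenerate (D : diagram) (b : nat -> C) (m : C) : Prop :=
  forall c, In c (crossings D) ->
    forall z, In z [zN b c; zS b c; zW b m c; zE b m c] ->
      z <> RtoC 0 /\ z <> RtoC 1.

Definition seg_shift (D : diagram) (N : nat) (s : seg) : R :=
  fold_right Rplus 0 (map (turn_shift N) (turns D s)).

Definition tinit (t : nat -> C) (s : seg) : C :=
  match s with SInt i => t i | _ => RtoC 0 end.
Definition tfin (D : diagram) (N : nat) (t : nat -> C) (s : seg) : C :=
  (tinit t s + RtoC (seg_shift D N s))%C.

Definition oratio (x1 x2 y1 y2 : option C) (ex : C) : option C :=
  match x1, x2, y1, y2 with
  | Some a1, Some a2, Some d1, Some d2 =>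
      if Cnz (d1 * d2)%C then Some (a1 * a2 / (d1 * d2) * Cexp ex)%C else None
  | _, _, _, _ => None
  end.

Definition twopii : C := (RtoC (2 * PI) * Ci)%C.

Definition Lambda_plus (N : nat) (mu t1 t2 t1' t2' : C) : option C :=
  let n := RtoC (INR N) in
  let one := RtoC 1 in
  oratio (E_N N (t2' - t1)%C) (E_N N (t2 - t1')%C)
         (E_N N (t2 - t1 - mu / n + one - one / n)%C)
         (E_N N (t2' - t1' + mu / n)%C)
         (twopii * (one - n) * (t2 - t1 - mu / n)
          + twopii * mu * (t2 + t1' - t1 - t2'))%C.

Definition Lambda_minus (N : nat) (mu t1 t2 t1' t2' : C) : option C :=
  let n := RtoC (INR N) in
  let one := RtoC 1 in
  oratio (E_N N (t1 - t2 + mu / n)%C) (E_N N (t1' - t2' - mu / n + one - one / n)%C)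
         (E_N N (t1 - t2' + one - one / n)%C)
         (E_N N (t1' - t2 + one - one / n)%C)
         (- (twopii * (one - n) * (t2 - t1 - mu / n))
          - twopii * mu * (t2 + t1' - t1 - t2'))%C.

Definition Lambda (D : diagram) (N : nat) (mu : C) (t : nat -> C)
    (c : crossing) : option C :=
  (if positive c then Lambda_plus else Lambda_minus) N mu
    (tfin D N t (in1 c)) (tfin D N t (in2 c))
    (tinit t (out1 c)) (tinit t (out2 c)).

Definition omul (x y : option C) : option C :=
  match x, y with Some a, Some b => Some (a * b)%C | _, _ => None end.

(* W_{D,mu}(t); None means W is not finite at t *)
Definition W (D : diagram) (N : nat) (mu : C) (t : nat -> C) : option C :=
  fold_right (fun c acc => omul (Lambda D N mu t c) acc) (Some (RtoC 1))
    (crossings D).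

(* Main.v *)
Require Import Defs.
From Stdlib Require Import Reals List Arith ZArith Lia Lra.
From Coquelicot Require Import Coquelicot.
Import ListNotations.
Open Scope R_scope.

Lemma Ceq (a b : C) : fst a = fst b -> snd a = snd b -> a = b.
Proof. destruct a, b; simpl; intros; subst; auto. Qed.

Lemma Cexp_add (a b : C) : Cexp (a + b)%C = (Cexp a * Cexp b)%C.
Proof.
  destruct a as [x y], b as [u v]; unfold Cexp; apply Ceq; simpl;
  rewrite exp_plus, ?cos_plus, ?sin_plus; ring.
Qed.

Lemma Cexp_ne0 (a : C) : Cexp a <> 0%C.
Proof.
  destruct a as [x y]; unfold Cexp; simpl; intro H.
  injection H as H1 H2.
  pose proof (exp_pos x).
  assert (cos y = 0) by (apply Rmult_eq_reg_l with (exp x); lra).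
  assert (sin y = 0) by (apply Rmult_eq_reg_l with (exp x); lra).
  pose proof (sin2_cos2 y). unfold Rsqr in *. rewrite H0, H3 in H4. lra.
Qed.

Lemma Cexp_0 : Cexp 0%C = 1%C.
Proof. unfold Cexp; apply Ceq; simpl; rewrite exp_0, ?cos_0, ?sin_0; ring. Qed.

Lemma Cexp_opp (a : C) : Cexp (- a)%C = (/ Cexp a)%C.
Proof.
  assert (H := Cexp_add a (-a)%C). rewrite Cplus_opp_r in H.
  rewrite Cexp_0 in H. pose proof (Cexp_ne0 a).
  rewrite <- (Cmult_1_l (/ Cexp a)), H. field; auto.
Qed.

Lemma cos_sin_Z (k : Z) : cos (IZR k * (2 * PI)) = 1 /\ sin (IZR k * (2 * PI)) = 0.
Proof.
  assert (Hn : forall n : nat, cos (INR n * (2 * PI)) = 1 /\ sin (INR n * (2 * PI)) = 0).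
  { intro n. pose proof (cos_period 0 n). pose proof (sin_period 0 n).
    rewrite Rplus_0_l, cos_0 in H. rewrite Rplus_0_l, sin_0 in H0.
    replace (INR n * (2 * PI)) with (2 * INR n * PI) by ring. auto. }
  destruct k as [|p|p].
  - simpl. rewrite Rmult_0_l, cos_0, sin_0; auto.
  - rewrite <- positive_nat_Z, <- INR_IZR_INZ. apply Hn.
  - replace (IZR (Z.neg p)) with (- INR (Pos.to_nat p)) by (rewrite INR_IZR_INZ, positive_nat_Z; reflexivity).
    destruct (Hn (Pos.to_nat p)) as [H H0].
    rewrite Ropp_mult_distr_l_reverse, cos_neg, sin_neg, H, H0. split; ring.
Qed.

Lemma Cexp_pair x y : Cexp (x, y) = (exp x * cos y, exp x * sin y).
Proof. reflexivity. Qed.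

Lemma twopii_mul (x y : R) : (twopii * (x, y))%C = (- (2 * PI * y), 2 * PI * x).
Proof. unfold twopii; apply Ceq; simpl; ring. Qed.

Lemma Cexp_2piZ (k : Z) : Cexp (twopii * RtoC (IZR k))%C = 1%C.
Proof.
  unfold RtoC. rewrite twopii_mul, Cexp_pair.
  destruct (cos_sin_Z k) as [H1 H2].
  replace (- (2 * PI * 0)) with 0 by ring. rewrite exp_0.
  replace (2 * PI * IZR k) with (IZR k * (2 * PI)) by ring. rewrite H1, H2.
  apply Ceq; simpl; ring.
Qed.

Lemma Cexp_pi : Cexp (RtoC PI * Ci)%C = (-1)%C.
Proof.
  replace (RtoC PI * Ci)%C with (0, PI) by (apply Ceq; simpl; ring).
  rewrite Cexp_pair, exp_0, cos_PI, sin_PI. apply Ceq; simpl; ring.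
Qed.
Lemma Cmult_integral (a b : C) : (a * b = 0)%C -> a = 0%C \/ b = 0%C.
Proof.
  intro H. destruct (Ceq_dec a 0) as [E|E]; [left; auto|right].
  replace b with (/ a * (a * b))%C by (field; auto). rewrite H. ring.
Qed.

Lemma Cmult_ne0 (a b : C) : a <> 0%C -> b <> 0%C -> (a * b)%C <> 0%C.
Proof. intros Ha Hb H. apply Cmult_integral in H. tauto. Qed.

Fixpoint cpow (a : C) (n : nat) : C := match n with O => 1%C | S n => (a * cpow a n)%C end.

Lemma cpow_ne0 (a : C) n : a <> 0%C -> cpow a n <> 0%C.
Proof.
  intro H; induction n; simpl.
  - intro E. injection E. lra.
  - intro E. apply Cmult_integral in E. tauto.
Qed.

Lemma Cnz_true (d : C) : d <> 0%C -> Cnz d = true.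
Proof.
  intro H; unfold Cnz; destruct d as [x y]; simpl.
  destruct (Req_EM_T x 0); destruct (Req_EM_T y 0); subst; auto.
Qed.

Lemma Cnz_false (d : C) : d = 0%C -> Cnz d = false.
Proof.
  intro H; subst; unfold Cnz; simpl.
  destruct (Req_EM_T 0 0); [|congruence]. destruct (Req_EM_T 0 0); congruence.
Qed.

Lemma Cprod_const (f : nat -> C) (a : C) l : (forall j, f j = a) -> Cprod (map f l) = cpow a (length l).
Proof. intro H; induction l; simpl; auto. rewrite H, IHl. reflexivity. Qed.

Definition kk (b : R) (z : C) : Z := Int_part ((snd z + b / 2) / b).
Definition ww (b : R) (z : C) : C := (z - Ci * RtoC (IZR (kk b z) * b))%C.
Definition Ff (N : nat) (b : R) (w : C) : C :=
  (RtoC 1 + Cexp (RtoC (2 * PI * b) * w - RtoC (PI * INR N) * Ci))%C.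

Lemma kk_shift b (z : C) : 0 < b -> kk b (z + Ci * RtoC b)%C = (kk b z + 1)%Z.
Proof.
  intro Hb; unfold kk.
  replace ((snd (z + Ci * RtoC b)%C + b / 2) / b) with ((snd z + b / 2) / b + 1)
    by (simpl; field; lra).
  symmetry; apply Int_part_spec. rewrite plus_IZR.
  destruct (base_Int_part ((snd z + b / 2) / b)). lra.
Qed.

Lemma ww_shift b (z : C) : 0 < b -> ww b (z + Ci * RtoC b)%C = ww b z.
Proof.
  intro Hb; unfold ww. rewrite kk_shift by auto. rewrite plus_IZR.
  apply Ceq; simpl; ring.
Qed.

Lemma fac_const N b (w : C) (J : Z) : b * b = INR N ->
  Phi_fac b w (IZR J) = Ff N b w.
Proof.
  intro Hb; unfold Phi_fac, Ff. f_equal.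
  replace (RtoC (2 * PI * b) * (w + Ci * RtoC ((IZR J - / 2) * b)))%C with
    ((RtoC (2 * PI * b) * w - RtoC (PI * INR N) * Ci) + twopii * RtoC (IZR (J * Z.of_nat N)))%C.
  - rewrite Cexp_add, Cexp_2piZ. ring.
  - rewrite mult_IZR, <- INR_IZR_INZ, <- Hb. unfold twopii. apply Ceq; simpl; field.
Qed.

Lemma Phi_formula N b (z : C) : b * b = INR N ->
  Phi b z =
  (let k := kk b z in let w := ww b z in let F := Ff N b w in
   if (0 <=? k)%Z then
     (if Cnz (cpow F (Z.to_nat k)) then Some (Phi_strip b w / cpow F (Z.to_nat k))%C else None)
   else Some (cpow F (Z.to_nat (- k)) * Phi_strip b w)%C).
Proof.
  intro Hb. unfold Phi. fold (kk b z). fold (ww b z). cbv zeta.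
  rewrite !Cprod_const with (a := Ff N b (ww b z)), !length_seq; auto.
  - intro j. replace (- INR j + 1) with (IZR (- Z.of_nat j + 1)).
    + apply fac_const; auto.
    + rewrite plus_IZR, opp_IZR, <- INR_IZR_INZ. reflexivity.
  - intro j. rewrite INR_IZR_INZ. apply fac_const; auto.
Qed.

Definition omap (f : C -> C) (x : option C) : option C :=
  match x with Some v => Some (f v) | None => None end.

Lemma Phi_shift N b (z : C) : 0 < b -> b * b = INR N -> Ff N b (ww b z) <> 0%C ->
  Phi b (z + Ci * RtoC b)%C = omap (fun v => v / Ff N b (ww b z))%C (Phi b z).
Proof.
  intros Hb Hbb HF. rewrite !(Phi_formula N) by auto. cbv zeta.
  rewrite kk_shift, ww_shift by auto.
  set (F := Ff N b (ww b z)) in *. set (SS := Phi_strip b (ww b z)).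
  destruct (Z_lt_le_dec (kk b z) 0) as [Hk|Hk].
  - destruct (Z.eq_dec (kk b z) (-1)) as [E|E].
    + rewrite E. simpl. rewrite Cnz_true.
      * simpl. f_equal. field. auto.
      * intro H. injection H. lra.
    + replace (0 <=? kk b z + 1)%Z with false by (symmetry; apply Z.leb_gt; lia).
      replace (0 <=? kk b z)%Z with false by (symmetry; apply Z.leb_gt; lia).
      simpl. replace (Z.to_nat (- kk b z)) with (S (Z.to_nat (- (kk b z + 1)))) by lia.
      simpl. f_equal. field. auto.
  - replace (0 <=? kk b z + 1)%Z with true by (symmetry; apply Z.leb_le; lia).
    replace (0 <=? kk b z)%Z with true by (symmetry; apply Z.leb_le; lia).
    replace (Z.to_nat (kk b z + 1)) with (S (Z.to_nat (kk b z))) by lia.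
    simpl. pose proof (cpow_ne0 F (Z.to_nat (kk b z)) HF).
    destruct (Cnz (cpow F (Z.to_nat (kk b z)))) eqn:E.
    + rewrite Cnz_true.
      * simpl. f_equal. field. auto.
      * intro H'. apply Cmult_integral in H'. tauto.
    + rewrite (Cnz_true _ H) in E; discriminate.
Qed.

Definition qf (N : nat) (t : C) : C := Cexp (twopii * RtoC (INR N) * t)%C.
Definition zarg (N : nat) (t : C) : C :=
  let b := sqrt (INR N) in (Ci * RtoC b * t - c_b b + Ci / RtoC b)%C.

Lemma E_N_zarg N t : E_N N t = Phi (sqrt (INR N)) (zarg N t).
Proof. reflexivity. Qed.

Lemma sqrtN_pos N : (1 <= N)%nat -> 0 < sqrt (INR N).
Proof. intro H. apply sqrt_lt_R0. apply lt_0_INR. lia. Qed.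

Lemma sqrtN_sq N : sqrt (INR N) * sqrt (INR N) = INR N.
Proof. apply sqrt_sqrt. apply pos_INR. Qed.

Lemma Ff_q N t : (1 <= N)%nat ->
  Ff N (sqrt (INR N)) (ww (sqrt (INR N)) (zarg N t)) = (1 - qf N t)%C.
Proof.
  intro HN. pose proof (sqrtN_pos N HN) as Hb. pose proof (sqrtN_sq N) as Hbb.
  set (b := sqrt (INR N)) in *. unfold Ff, qf.
  set (k := kk b (zarg N t)). unfold ww. fold k.
  replace (RtoC (2 * PI * b) * (zarg N t - Ci * RtoC (IZR k * b)) - RtoC (PI * INR N) * Ci)%C
    with ((twopii * RtoC (INR N) * t + RtoC PI * Ci) + twopii * RtoC (IZR (- (k * Z.of_nat N) - Z.of_nat N)))%C.
  - rewrite !Cexp_add, Cexp_2piZ, Cexp_pi. ring.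
  - rewrite minus_IZR, opp_IZR, mult_IZR, <- INR_IZR_INZ, <- Hbb.
    unfold zarg, c_b, twopii. fold b. apply Ceq; simpl; field; lra.
Qed.

Lemma zarg_shift N t : zarg N (t + 1)%C = (zarg N t + Ci * RtoC (sqrt (INR N)))%C.
Proof. unfold zarg. ring. Qed.

Lemma qf_shift N t : qf N (t + 1)%C = qf N t.
Proof.
  unfold qf. replace (twopii * RtoC (INR N) * (t + 1))%C with
    (twopii * RtoC (INR N) * t + twopii * RtoC (IZR (Z.of_nat N)))%C.
  - rewrite Cexp_add, Cexp_2piZ. ring.
  - rewrite <- INR_IZR_INZ. ring.
Qed.

Lemma E_shift N t : (1 <= N)%nat -> qf N t <> 1%C ->
  E_N N (t + 1)%C = omap (fun v => v / (1 - qf N t))%C (E_N N t).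
Proof.
  intros HN Hq. rewrite !E_N_zarg, zarg_shift.
  rewrite (Phi_shift N).
  - rewrite Ff_q by auto. reflexivity.
  - apply sqrtN_pos; auto.
  - apply sqrtN_sq.
  - rewrite Ff_q by auto. intro H. apply Hq.
    replace (qf N t) with (1 - (1 - qf N t))%C by ring. rewrite H. ring.
Qed.

Lemma E_some N t : (1 <= N)%nat -> qf N t <> 1%C ->
  exists v : C, v <> 0%C /\ E_N N t = Some v.
Proof.
  intros HN Hq. rewrite E_N_zarg. rewrite (Phi_formula N) by apply sqrtN_sq. cbv zeta.
  rewrite Ff_q by auto.
  assert (HF : (1 - qf N t)%C <> 0%C).
  { intro H. apply Hq. replace (qf N t) with (1 - (1 - qf N t))%C by ring. rewrite H. ring. }
  assert (HS : forall w, Phi_strip (sqrt (INR N)) w <> 0%C) by (intro; apply Cexp_ne0).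
  destruct (0 <=? _)%Z.
  - rewrite Cnz_true by (apply cpow_ne0; auto).
    eexists; split; [|reflexivity].
    intro H. apply (Cmult_integral) in H. destruct H as [H|H]; [apply (HS _ H)|].
    assert (H' := Cinv_r _ (cpow_ne0 _ (Z.to_nat (kk (sqrt (INR N)) (zarg N t))) HF)).
    rewrite H, Cmult_0_r in H'. injection H'. lra.
  - eexists; split; [|reflexivity]. apply Cmult_ne0; auto. apply cpow_ne0; auto.
Qed.

Definition dd (r : bool) : C := RtoC (if r then 1 else 0).
Definition fz (x : C) (rx ry : bool) : C :=
  ((if rx then / x else 1) * (if ry then x else 1))%C.

Lemma fz_ne0 (x : C) rx ry : x <> 0%C -> fz x rx ry <> 0%C.
Proof.
  intro H; unfold fz; apply Cmult_ne0; destruct rx, ry; auto;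
  try (intro E; injection E; lra).
  all: intro E; assert (E' := Cinv_r x H); rewrite E, Cmult_0_r in E'; injection E'; lra.
Qed.

Lemma one_minus_ne0 (q : C) : q <> 1%C -> (1 - q)%C <> 0%C.
Proof. intros Hq H. apply Hq. replace q with (1 - (1 - q))%C by ring. rewrite H. ring. Qed.

Lemma E_shift_bb N (t : C) rx ry (v : C) : (1 <= N)%nat -> qf N t <> 1%C -> E_N N t = Some v ->
  E_N N (t + (dd rx - dd ry))%C = Some (v * fz (1 - qf N t) rx ry)%C.
Proof.
  intros HN Hq Hv. pose proof (one_minus_ne0 _ Hq) as HF.
  destruct rx, ry; unfold fz, dd.
  - replace (t + (RtoC 1 - RtoC 1))%C with t by ring. rewrite Hv. f_equal. field. auto.
  - replace (t + (RtoC 1 - RtoC 0))%C with (t + 1)%C by ring.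
    rewrite E_shift, Hv by auto. simpl. f_equal. field. auto.
  - set (s := (t + (RtoC 0 - RtoC 1))%C).
    assert (Hs : t = (s + 1)%C) by (unfold s; ring).
    assert (Hq' : qf N s = qf N t) by (rewrite Hs, qf_shift; auto).
    rewrite Hs, E_shift in Hv by (try rewrite Hq'; auto).
    destruct (E_N N s); simpl in Hv; [|discriminate].
    injection Hv as Hv. rewrite Hq' in Hv. f_equal. rewrite <- Hv. field. auto.
  - replace (t + (RtoC 0 - RtoC 0))%C with t by ring. rewrite Hv. f_equal. ring.
Qed.

Lemma Cexp_dd (mu : C) r : Cexp (twopii * mu * dd r)%C = (if r then Cexp (twopii * mu) else 1)%C.
Proof.
  destruct r; unfold dd.
  - f_equal. ring.
  - replace (twopii * mu * RtoC 0)%C with (RtoC 0) by ring. apply Cexp_0.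
Qed.

Lemma Cexp_int_dd N ra rb :
  Cexp (twopii * (RtoC 1 - RtoC (INR N)) * (dd ra - dd rb))%C = 1%C.
Proof.
  assert (E : forall k : Z, IZR k = (1 - INR N) * ((if ra then 1 else 0) - (if rb then 1 else 0)) ->
     Cexp (twopii * (RtoC 1 - RtoC (INR N)) * (dd ra - dd rb))%C = 1%C).
  { intros k Hk. transitivity (Cexp (twopii * RtoC (IZR k))); [|apply Cexp_2piZ].
    f_equal. rewrite Hk. unfold dd. apply Ceq; simpl; ring. }
  apply (E ((1 - Z.of_nat N) * (Z.b2z ra - Z.b2z rb))%Z).
  rewrite mult_IZR, !minus_IZR, <- INR_IZR_INZ.
  destruct ra, rb; cbn [Z.b2z]; ring.
Qed.

Lemma oratio_some (e1 e2 e3 e4 ex : C) : e3 <> 0%C -> e4 <> 0%C ->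
  oratio (Some e1) (Some e2) (Some e3) (Some e4) ex = Some (e1 * e2 / (e3 * e4) * Cexp ex)%C.
Proof. intros. unfold oratio. rewrite Cnz_true; auto. apply Cmult_ne0; auto. Qed.

Definition mf (m : C) (r : bool) : C := if r then m else 1%C.

Lemma mf_ne0 (m : C) r : m <> 0%C -> mf m r <> 0%C.
Proof. destruct r; simpl; auto. intros _ E; injection E; lra. Qed.

Lemma Lp_shift N (mu T1 T2 T1' T2' : C) r1 r2 r1' r2' (e1 e2 e3 e4 : C) :
  (1 <= N)%nat ->
  let n := RtoC (INR N) in let one := RtoC 1 in
  let A1 := (T2' - T1)%C in let A2 := (T2 - T1')%C in
  let A3 := (T2 - T1 - mu / n + one - one / n)%C in let A4 := (T2' - T1' + mu / n)%C in
  E_N N A1 = Some e1 -> E_N N A2 = Some e2 -> E_N N A3 = Some e3 -> E_N N A4 = Some e4 ->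
  qf N A1 <> 1%C -> qf N A2 <> 1%C -> qf N A3 <> 1%C -> qf N A4 <> 1%C ->
  e3 <> 0%C -> e4 <> 0%C ->
  let m := Cexp (twopii * mu)%C in
  Lambda_plus N mu (T1 + dd r1) (T2 + dd r2) (T1' + dd r1') (T2' + dd r2') =
  omap (fun v => v *
     (fz (1 - qf N A1) r2' r1 * fz (1 - qf N A2) r2 r1'
      / (fz (1 - qf N A3) r2 r1 * fz (1 - qf N A4) r2' r1')
      * (mf m r2 * mf m r1' / (mf m r1 * mf m r2'))))%C
   (Lambda_plus N mu T1 T2 T1' T2').
Proof.
  intros HN n one A1 A2 A3 A4 H1 H2 H3 H4 Q1 Q2 Q3 Q4 N3 N4 m.
  unfold Lambda_plus. fold n one.
  assert (K1 : E_N N (T2' + dd r2' - (T1 + dd r1))%C = Some (e1 * fz (1 - qf N A1) r2' r1)%C).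
  { transitivity (E_N N (A1 + (dd r2' - dd r1))%C); [f_equal; unfold A1; ring|].
    apply E_shift_bb; auto. }
  assert (K2 : E_N N (T2 + dd r2 - (T1' + dd r1'))%C = Some (e2 * fz (1 - qf N A2) r2 r1')%C).
  { transitivity (E_N N (A2 + (dd r2 - dd r1'))%C); [f_equal; unfold A2; ring|].
    apply E_shift_bb; auto. }
  assert (K3 : E_N N (T2 + dd r2 - (T1 + dd r1) - mu / n + one - one / n)%C
               = Some (e3 * fz (1 - qf N A3) r2 r1)%C).
  { transitivity (E_N N (A3 + (dd r2 - dd r1))%C); [f_equal; unfold A3; ring|].
    apply E_shift_bb; auto. }
  assert (K4 : E_N N (T2' + dd r2' - (T1' + dd r1') + mu / n)%C
               = Some (e4 * fz (1 - qf N A4) r2' r1')%C).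
  { transitivity (E_N N (A4 + (dd r2' - dd r1'))%C); [f_equal; unfold A4; ring|].
    apply E_shift_bb; auto. }
  fold A1 A2 A3 A4. rewrite K1, K2, K3, K4, H1, H2, H3, H4.
  assert (F3 := fz_ne0 _ r2 r1 (one_minus_ne0 _ Q3)).
  assert (F4 := fz_ne0 _ r2' r1' (one_minus_ne0 _ Q4)).
  rewrite !oratio_some by (auto; apply Cmult_ne0; auto).
  simpl. f_equal.
  match goal with |- (_ * Cexp ?X' = _)%C =>
    replace X' with ((twopii * (one - n) * (T2 - T1 - mu / n) +
       twopii * mu * (T2 + T1' - T1 - T2'))
      + twopii * (one - n) * (dd r2 - dd r1)
      + (twopii * mu * dd r2 + twopii * mu * dd r1' + - (twopii * mu * dd r1)
         + - (twopii * mu * dd r2')))%C by ring end.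
  rewrite !Cexp_add, !Cexp_opp, !Cexp_dd. unfold one, n. rewrite Cexp_int_dd.
  fold m. pose proof (Cexp_ne0 (twopii * mu)) as Hm. fold m in Hm.
  assert (M1 := mf_ne0 m r1 Hm). assert (M2 := mf_ne0 m r2' Hm).
  change (if r2 then m else 1%C) with (mf m r2).
  change (if r1' then m else 1%C) with (mf m r1').
  change (if r1 then m else 1%C) with (mf m r1).
  change (if r2' then m else 1%C) with (mf m r2').
  field. repeat split; auto.
Qed.

Lemma Lm_shift N (mu T1 T2 T1' T2' : C) r1 r2 r1' r2' (e1 e2 e3 e4 : C) :
  (1 <= N)%nat ->
  let n := RtoC (INR N) in let one := RtoC 1 in
  let A1 := (T1 - T2 + mu / n)%C in let A2 := (T1' - T2' - mu / n + one - one / n)%C in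
  let A3 := (T1 - T2' + one - one / n)%C in let A4 := (T1' - T2 + one - one / n)%C in
  E_N N A1 = Some e1 -> E_N N A2 = Some e2 -> E_N N A3 = Some e3 -> E_N N A4 = Some e4 ->
  qf N A1 <> 1%C -> qf N A2 <> 1%C -> qf N A3 <> 1%C -> qf N A4 <> 1%C ->
  e3 <> 0%C -> e4 <> 0%C ->
  let m := Cexp (twopii * mu)%C in
  Lambda_minus N mu (T1 + dd r1) (T2 + dd r2) (T1' + dd r1') (T2' + dd r2') =
  omap (fun v => v *
     (fz (1 - qf N A1) r1 r2 * fz (1 - qf N A2) r1' r2'
      / (fz (1 - qf N A3) r1 r2' * fz (1 - qf N A4) r1' r2)
      * (mf m r1 * mf m r2' / (mf m r2 * mf m r1'))))%C
   (Lambda_minus N mu T1 T2 T1' T2').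
Proof.
  intros HN n one A1 A2 A3 A4 H1 H2 H3 H4 Q1 Q2 Q3 Q4 N3 N4 m.
  unfold Lambda_minus. fold n one.
  assert (K1 : E_N N (T1 + dd r1 - (T2 + dd r2) + mu / n)%C = Some (e1 * fz (1 - qf N A1) r1 r2)%C).
  { transitivity (E_N N (A1 + (dd r1 - dd r2))%C); [f_equal; unfold A1; ring|].
    apply E_shift_bb; auto. }
  assert (K2 : E_N N (T1' + dd r1' - (T2' + dd r2') - mu / n + one - one / n)%C
               = Some (e2 * fz (1 - qf N A2) r1' r2')%C).
  { transitivity (E_N N (A2 + (dd r1' - dd r2'))%C); [f_equal; unfold A2; ring|].
    apply E_shift_bb; auto. }
  assert (K3 : E_N N (T1 + dd r1 - (T2' + dd r2') + one - one / n)%C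
               = Some (e3 * fz (1 - qf N A3) r1 r2')%C).
  { transitivity (E_N N (A3 + (dd r1 - dd r2'))%C); [f_equal; unfold A3; ring|].
    apply E_shift_bb; auto. }
  assert (K4 : E_N N (T1' + dd r1' - (T2 + dd r2) + one - one / n)%C
               = Some (e4 * fz (1 - qf N A4) r1' r2)%C).
  { transitivity (E_N N (A4 + (dd r1' - dd r2))%C); [f_equal; unfold A4; ring|].
    apply E_shift_bb; auto. }
  fold A1 A2 A3 A4. rewrite K1, K2, K3, K4, H1, H2, H3, H4.
  assert (F3 := fz_ne0 _ r1 r2' (one_minus_ne0 _ Q3)).
  assert (F4 := fz_ne0 _ r1' r2 (one_minus_ne0 _ Q4)).
  rewrite !oratio_some by (auto; apply Cmult_ne0; auto).
  simpl. f_equal.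
  match goal with |- (_ * Cexp ?X' = _)%C =>
    replace X' with ((- (twopii * (one - n) * (T2 - T1 - mu / n)) -
       twopii * mu * (T2 + T1' - T1 - T2'))
      + twopii * (one - n) * (dd r1 - dd r2)
      + (twopii * mu * dd r1 + twopii * mu * dd r2' + - (twopii * mu * dd r2)
         + - (twopii * mu * dd r1')))%C by ring end.
  rewrite !Cexp_add, !Cexp_opp, !Cexp_dd. unfold one, n. rewrite Cexp_int_dd.
  fold m. pose proof (Cexp_ne0 (twopii * mu)) as Hm. fold m in Hm.
  assert (M1 := mf_ne0 m r2 Hm). assert (M2 := mf_ne0 m r1' Hm).
  change (if r2 then m else 1%C) with (mf m r2).
  change (if r1' then m else 1%C) with (mf m r1').
  change (if r1 then m else 1%C) with (mf m r1).
  change (if r2' then m else 1%C) with (mf m r2').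
  field. repeat split; auto.
Qed.

Lemma qf_add N (x y : C) : qf N (x + y)%C = (qf N x * qf N y)%C.
Proof. unfold qf. rewrite <- Cexp_add. f_equal. ring. Qed.

Lemma qf_sub N (x y : C) : qf N (x - y)%C = (qf N x / qf N y)%C.
Proof.
  unfold qf. unfold Cdiv. rewrite <- Cexp_opp, <- Cexp_add. f_equal. ring.
Qed.

Lemma INR_C_ne0 N : (1 <= N)%nat -> RtoC (INR N) <> 0%C.
Proof. intros HN H. injection H. pose proof (lt_0_INR N ltac:(lia)). lra. Qed.

Lemma qf_divN N (x : C) : (1 <= N)%nat -> qf N (x / RtoC (INR N))%C = Cexp (twopii * x)%C.
Proof. intro HN. unfold qf. f_equal. field. apply INR_C_ne0; auto. Qed.

Lemma qf_one N : qf N (RtoC 1) = 1%C.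
Proof.
  unfold qf. transitivity (Cexp (twopii * RtoC (IZR (Z.of_nat N))))%C; [|apply Cexp_2piZ].
  f_equal. rewrite <- INR_IZR_INZ. ring.
Qed.

Lemma qf_shift_int N (x : R) (k : Z) : INR N * x = IZR k -> qf N (RtoC x) = 1%C.
Proof.
  intros Hk. unfold qf. transitivity (Cexp (twopii * RtoC (IZR k)))%C; [|apply Cexp_2piZ].
  f_equal. rewrite <- Hk.
  apply Ceq; simpl; ring.
Qed.

Lemma seg_shift_int D N s : (1 <= N)%nat -> exists k : Z, INR N * seg_shift D N s = IZR k.
Proof.
  intro HN. unfold seg_shift. induction (turns D s) as [|x l IH]; simpl.
  - exists 0%Z. simpl. ring.
  - destruct IH as [k Hk].
    assert (HN0 : INR N <> 0) by (pose proof (lt_0_INR N ltac:(lia)); lra).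
    destruct x; simpl.
    + exists k. rewrite Rmult_plus_distr_l, Hk. ring.
    + exists k. rewrite Rmult_plus_distr_l, Hk. ring.
    + exists (k + 1 - Z.of_nat N)%Z. rewrite Rmult_plus_distr_l, Hk, minus_IZR, plus_IZR, <- INR_IZR_INZ.
      field. auto.
    + exists (k - 1 + Z.of_nat N)%Z. rewrite Rmult_plus_distr_l, Hk, plus_IZR, minus_IZR, <- INR_IZR_INZ.
      field. auto.
Qed.

Lemma qf_tinit D N (beta b : nat -> C) (n : nat -> Z) s :
  (1 <= N)%nat -> valid_seg D s ->
  (forall i, (i < nE D)%nat -> Cexp (twopii * beta i)%C = b i) ->
  qf N (tinit (fun j => ((beta j + RtoC (IZR (n j))) / RtoC (INR N))%C) s) = bval b s.
Proof.
  intros HN Hv Hb. destruct s; simpl.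
  - unfold qf. replace (twopii * RtoC (INR N) * RtoC 0)%C with (RtoC 0) by ring. apply Cexp_0.
  - unfold qf. replace (twopii * RtoC (INR N) * RtoC 0)%C with (RtoC 0) by ring. apply Cexp_0.
  - rewrite qf_divN by auto. simpl in Hv.
    replace (twopii * (beta i + RtoC (IZR (n i))))%C with (twopii * beta i + twopii * RtoC (IZR (n i)))%C by ring.
    rewrite Cexp_add, Cexp_2piZ, Hb by auto. ring.
Qed.

Lemma qf_tfin D N (beta b : nat -> C) (n : nat -> Z) s :
  (1 <= N)%nat -> valid_seg D s ->
  (forall i, (i < nE D)%nat -> Cexp (twopii * beta i)%C = b i) ->
  qf N (tfin D N (fun j => ((beta j + RtoC (IZR (n j))) / RtoC (INR N))%C) s) = bval b s.
Proof.
  intros HN Hv Hb. unfold tfin. rewrite qf_add, (qf_tinit D N beta b n) by auto.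
  destruct (seg_shift_int D N s HN) as [k Hk]. rewrite (qf_shift_int N _ k Hk). ring.
Qed.

Lemma tinit_shift (pt : nat -> C) i s :
  tinit (fun j => if Nat.eqb j i then (pt j + RtoC 1)%C else pt j) s =
  (tinit pt s + dd (seg_eqb s (SInt i)))%C.
Proof.
  destruct s; simpl; unfold dd; try ring.
  destruct (Nat.eqb i0 i); ring.
Qed.

Lemma tfin_shift D N (pt : nat -> C) i s :
  tfin D N (fun j => if Nat.eqb j i then (pt j + RtoC 1)%C else pt j) s =
  (tfin D N pt s + dd (seg_eqb s (SInt i)))%C.
Proof. unfold tfin. rewrite tinit_shift. ring. Qed.

Definition Gi (b : nat -> C) (m : C) (i : nat) (c : crossing) : C :=
  ((if seg_eqb (in1 c) (SInt i) then / a_in1 b m c else 1) *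
   (if seg_eqb (in2 c) (SInt i) then / a_in2 b m c else 1) *
   (if seg_eqb (out1 c) (SInt i) then a_out1 b m c else 1) *
   (if seg_eqb (out2 c) (SInt i) then a_out2 b m c else 1))%C.

Lemma factor_plus (zn zs zw ze m : C) r1 r2 r1' r2' :
  (1 - zn)%C <> 0%C -> (1 - zs)%C <> 0%C -> (1 - zw)%C <> 0%C -> (1 - ze)%C <> 0%C -> m <> 0%C ->
  (fz (1 - zn) r2' r1 * fz (1 - zs) r2 r1' / (fz (1 - zw) r2 r1 * fz (1 - ze) r2' r1')
      * (mf m r2 * mf m r1' / (mf m r1 * mf m r2')))%C =
  ((if r1 then / (m * (1 - zw) / (1 - zn)) else 1) *
   (if r2 then / (/ m * (1 - zs) / (1 - zw)) else 1) *
   (if r1' then m * (1 - zs) / (1 - ze) else 1) *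
   (if r2' then / m * (1 - ze) / (1 - zn) else 1))%C.
Proof.
  intros. destruct r1, r2, r1', r2'; unfold fz, mf; field; repeat split; auto.
Qed.

Lemma factor_minus (zn zs zw ze m : C) r1 r2 r1' r2' :
  (1 - zn)%C <> 0%C -> (1 - zs)%C <> 0%C -> (1 - zw)%C <> 0%C -> (1 - ze)%C <> 0%C -> m <> 0%C ->
  (fz (1 - zw) r1 r2 * fz (1 - ze) r1' r2' / (fz (1 - zn) r1 r2' * fz (1 - zs) r1' r2)
      * (mf m r1 * mf m r2' / (mf m r2 * mf m r1')))%C =
  ((if r1 then / (/ m * (1 - zw) / (1 - zn)) else 1) *
   (if r2 then / (m * (1 - zs) / (1 - zw)) else 1) *
   (if r1' then / m * (1 - zs) / (1 - ze) else 1) *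
   (if r2' then m * (1 - ze) / (1 - zn) else 1))%C.
Proof.
  intros. destruct r1, r2, r1', r2'; unfold fz, mf; field; repeat split; auto.
Qed.

Lemma cross_shift D N mu (b beta : nat -> C) (n : nat -> Z) i c :
  (1 <= N)%nat ->
  valid_seg D (in1 c) -> valid_seg D (in2 c) -> valid_seg D (out1 c) -> valid_seg D (out2 c) ->
  (forall j, (j < nE D)%nat -> Cexp (twopii * beta j)%C = b j) ->
  (forall j, (j < nE D)%nat -> b j <> 0%C) ->
  let m := Cexp (twopii * mu)%C in
  (forall z, In z [zN b c; zS b c; zW b m c; zE b m c] -> z <> RtoC 0 /\ z <> RtoC 1) ->
  let pt := fun j => ((beta j + RtoC (IZR (n j))) / RtoC (INR N))%C in
  exists v : C, Lambda D N mu pt c = Some v /\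
   Lambda D N mu (fun j => if Nat.eqb j i then (pt j + RtoC 1)%C else pt j) c = Some (v * Gi b m i c)%C.
Proof.
  intros HN V1 V2 V3 V4 Hbeta Hb0 m Hnd pt.
  assert (HzN : zN b c <> 1%C) by (apply Hnd; simpl; auto).
  assert (HzS : zS b c <> 1%C) by (apply Hnd; simpl; auto).
  assert (HzW : zW b m c <> 1%C) by (apply Hnd; simpl; auto).
  assert (HzE : zE b m c <> 1%C) by (apply Hnd; simpl; auto).
  assert (Hbv : forall s, valid_seg D s -> bval b s <> 0%C).
  { intros s Hs. destruct s; simpl in *; auto; intro E; injection E; lra. }
  pose proof (Hbv _ V1) as B1. pose proof (Hbv _ V2) as B2.
  pose proof (Hbv _ V3) as B3. pose proof (Hbv _ V4) as B4.
  assert (Hm : m <> 0%C) by apply Cexp_ne0.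
  set (T1 := tfin D N pt (in1 c)). set (T2 := tfin D N pt (in2 c)).
  set (T1' := tinit pt (out1 c)). set (T2' := tinit pt (out2 c)).
  assert (QT1 : qf N T1 = bval b (in1 c)) by (apply (qf_tfin D N beta b n); auto).
  assert (QT2 : qf N T2 = bval b (in2 c)) by (apply (qf_tfin D N beta b n); auto).
  assert (QT1' : qf N T1' = bval b (out1 c)) by (apply (qf_tinit D N beta b n); auto).
  assert (QT2' : qf N T2' = bval b (out2 c)) by (apply (qf_tinit D N beta b n); auto).
  assert (Qmu : qf N (mu / RtoC (INR N))%C = m) by (apply qf_divN; auto).
  assert (Q1n : qf N (RtoC 1 / RtoC (INR N))%C = 1%C)
    by (rewrite qf_divN by auto; apply (Cexp_2piZ 1)).
  assert (Q1 : qf N (RtoC 1) = 1%C) by apply qf_one.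
  unfold Lambda. rewrite !tfin_shift, !tinit_shift. fold T1 T2 T1' T2'.
  destruct (Defs.positive c) eqn:Hpos.
  - assert (A1 : qf N (T2' - T1)%C = zN b c)
      by (rewrite qf_sub, QT2', QT1; unfold zN; rewrite Hpos; reflexivity).
    assert (A2 : qf N (T2 - T1')%C = zS b c)
      by (rewrite qf_sub, QT2, QT1'; unfold zS; rewrite Hpos; reflexivity).
    assert (A3 : qf N (T2 - T1 - mu / RtoC (INR N) + RtoC 1 - RtoC 1 / RtoC (INR N))%C = zW b m c)
      by (rewrite !qf_sub, !qf_add, !qf_sub, QT2, QT1, Qmu, Q1, Q1n; unfold zW; rewrite Hpos;
          cbn [epow]; field; auto).
    assert (A4 : qf N (T2' - T1' + mu / RtoC (INR N))%C = zE b m c)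
      by (rewrite qf_add, qf_sub, QT2', QT1', Qmu; unfold zE; rewrite Hpos;
          cbn [epow]; field; auto).
    destruct (E_some N _ HN ltac:(rewrite A1; auto)) as [e1 [N1 E1]].
    destruct (E_some N _ HN ltac:(rewrite A2; auto)) as [e2 [N2 E2]].
    destruct (E_some N _ HN ltac:(rewrite A3; auto)) as [e3 [N3 E3]].
    destruct (E_some N _ HN ltac:(rewrite A4; auto)) as [e4 [N4 E4]].
    pose proof (Lp_shift N mu T1 T2 T1' T2' (seg_eqb (in1 c) (SInt i)) (seg_eqb (in2 c) (SInt i))
                  (seg_eqb (out1 c) (SInt i)) (seg_eqb (out2 c) (SInt i)) e1 e2 e3 e4 HN) as L.
    cbv zeta in L. fold m in L.
    rewrite L; clear L; try (rewrite ?A1, ?A2, ?A3, ?A4; auto).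
    assert (L0 : Lambda_plus N mu T1 T2 T1' T2' =
       Some (e1 * e2 / (e3 * e4) * Cexp (twopii * (RtoC 1 - RtoC (INR N)) * (T2 - T1 - mu / RtoC (INR N))
          + twopii * mu * (T2 + T1' - T1 - T2')))%C).
    { unfold Lambda_plus. cbv zeta. rewrite E1, E2, E3, E4. apply oratio_some; auto. }
    rewrite L0. eexists; split; [reflexivity|]. simpl. f_equal. f_equal.
    rewrite ?A1, ?A2, ?A3, ?A4.
    rewrite factor_plus by (auto using one_minus_ne0).
    unfold Gi, a_in1, a_in2, a_out1, a_out2. rewrite Hpos. cbn [epow negb]. reflexivity.
  - assert (A1 : qf N (T1 - T2 + mu / RtoC (INR N))%C = zW b m c)
      by (rewrite qf_add, qf_sub, QT2, QT1, Qmu; unfold zW; rewrite Hpos;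
          cbn [epow]; field; auto).
    assert (A2 : qf N (T1' - T2' - mu / RtoC (INR N) + RtoC 1 - RtoC 1 / RtoC (INR N))%C = zE b m c)
      by (rewrite !qf_sub, !qf_add, !qf_sub, QT2', QT1', Qmu, Q1, Q1n; unfold zE; rewrite Hpos;
          cbn [epow]; field; auto).
    assert (A3 : qf N (T1 - T2' + RtoC 1 - RtoC 1 / RtoC (INR N))%C = zN b c)
      by (rewrite !qf_sub, !qf_add, !qf_sub, QT2', QT1, Q1, Q1n; unfold zN; rewrite Hpos;
          cbn [epow]; field; auto).
    assert (A4 : qf N (T1' - T2 + RtoC 1 - RtoC 1 / RtoC (INR N))%C = zS b c)
      by (rewrite !qf_sub, !qf_add, !qf_sub, QT2, QT1', Q1, Q1n; unfold zS; rewrite Hpos;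
          cbn [epow]; field; auto).
    destruct (E_some N _ HN ltac:(rewrite A1; auto)) as [e1 [N1 E1]].
    destruct (E_some N _ HN ltac:(rewrite A2; auto)) as [e2 [N2 E2]].
    destruct (E_some N _ HN ltac:(rewrite A3; auto)) as [e3 [N3 E3]].
    destruct (E_some N _ HN ltac:(rewrite A4; auto)) as [e4 [N4 E4]].
    pose proof (Lm_shift N mu T1 T2 T1' T2' (seg_eqb (in1 c) (SInt i)) (seg_eqb (in2 c) (SInt i))
                  (seg_eqb (out1 c) (SInt i)) (seg_eqb (out2 c) (SInt i)) e1 e2 e3 e4 HN) as L.
    cbv zeta in L. fold m in L.
    rewrite L; clear L; try (rewrite ?A1, ?A2, ?A3, ?A4; auto).
    assert (L0 : Lambda_minus N mu T1 T2 T1' T2' =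
       Some (e1 * e2 / (e3 * e4) * Cexp (- (twopii * (RtoC 1 - RtoC (INR N)) * (T2 - T1 - mu / RtoC (INR N)))
          - twopii * mu * (T2 + T1' - T1 - T2')))%C).
    { unfold Lambda_minus. cbv zeta. rewrite E1, E2, E3, E4. apply oratio_some; auto. }
    rewrite L0. eexists; split; [reflexivity|]. simpl. f_equal. f_equal.
    rewrite ?A1, ?A2, ?A3, ?A4.
    rewrite factor_minus by (auto using one_minus_ne0).
    unfold Gi, a_in1, a_in2, a_out1, a_out2. rewrite Hpos. cbn [epow negb]. reflexivity.
Qed.

Lemma fold_omul (l : list crossing) (L L' : crossing -> option C) (G : crossing -> C) :
  (forall c, In c l -> exists v : C, L c = Some v /\ L' c = Some (v * G c)%C) ->
  exists P : C, fold_right (fun c acc => omul (L c) acc) (Some (RtoC 1)) l = Some P /\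
    fold_right (fun c acc => omul (L' c) acc) (Some (RtoC 1)) l = Some (P * Cprod (map G l))%C.
Proof.
  induction l as [|c l IH]; intro H.
  - exists 1%C. simpl. split; auto. f_equal. ring.
  - destruct IH as [P [HP HP']]. { intros; apply H; simpl; auto. }
    destruct (H c (or_introl eq_refl)) as [v [Hv Hv']].
    exists (v * P)%C. simpl. rewrite HP, HP', Hv, Hv'. simpl. split; auto. f_equal. ring.
Qed.

Definition Gin (b : nat -> C) (m : C) (s : seg) (c : crossing) : C :=
  ((if seg_eqb (in1 c) s then / a_in1 b m c else 1) *
   (if seg_eqb (in2 c) s then / a_in2 b m c else 1))%C.
Definition Gout (b : nat -> C) (m : C) (s : seg) (c : crossing) : C :=
  ((if seg_eqb (out1 c) s then a_out1 b m c else 1) *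
   (if seg_eqb (out2 c) s then a_out2 b m c else 1))%C.

Lemma Cprod_mul (f g : crossing -> C) l :
  Cprod (map (fun c => f c * g c)%C l) = (Cprod (map f l) * Cprod (map g l))%C.
Proof. induction l; simpl. ring. rewrite IHl. ring. Qed.

Lemma seg_eqb_eq s s' : seg_eqb s s' = true -> s = s'.
Proof.
  destruct s, s'; simpl; try discriminate; auto.
  intro H. apply Nat.eqb_eq in H. subst. auto.
Qed.

Definition cnt_in (l : list crossing) (s : seg) : nat :=
  fold_right (fun c acc =>
    ((if seg_eqb (in1 c) s then 1 else 0) +
     (if seg_eqb (in2 c) s then 1 else 0) + acc)%nat) 0%nat l.
Definition cnt_out (l : list crossing) (s : seg) : nat :=
  fold_right (fun c acc =>
    ((if seg_eqb (out1 c) s then 1 else 0) +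
     (if seg_eqb (out2 c) s then 1 else 0) + acc)%nat) 0%nat l.

Lemma in_zero b m l s : cnt_in l s = 0%nat -> Cprod (map (Gin b m s) l) = 1%C.
Proof.
  induction l as [|c l IH]; simpl; auto.
  destruct (seg_eqb (in1 c) s) eqn:E1, (seg_eqb (in2 c) s) eqn:E2; simpl; try lia.
  intro H. rewrite IH by auto. unfold Gin at 1. rewrite E1, E2. ring.
Qed.

Lemma out_zero b m l s : cnt_out l s = 0%nat -> Cprod (map (Gout b m s) l) = 1%C.
Proof.
  induction l as [|c l IH]; simpl; auto.
  destruct (seg_eqb (out1 c) s) eqn:E1, (seg_eqb (out2 c) s) eqn:E2; simpl; try lia.
  intro H. rewrite IH by auto. unfold Gout at 1. rewrite E1, E2. ring.
Qed.

Lemma in_one b m l s : cnt_in l s = 1%nat ->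
  exists c, In c l /\
    ((in1 c = s /\ Cprod (map (Gin b m s) l) = (/ a_in1 b m c)%C) \/
     (in2 c = s /\ Cprod (map (Gin b m s) l) = (/ a_in2 b m c)%C)).
Proof.
  induction l as [|c l IH]; simpl; [lia|].
  destruct (seg_eqb (in1 c) s) eqn:E1, (seg_eqb (in2 c) s) eqn:E2; simpl; intro H; try lia.
  - assert (HG : Gin b m s c = (/ a_in1 b m c)%C) by (unfold Gin; rewrite E1, E2; ring).
    exists c. split; auto. left. split; [apply seg_eqb_eq; auto|].
    rewrite HG, in_zero by lia. ring.
  - assert (HG : Gin b m s c = (/ a_in2 b m c)%C) by (unfold Gin; rewrite E1, E2; ring).
    exists c. split; auto. right. split; [apply seg_eqb_eq; auto|].
    rewrite HG, in_zero by lia. ring.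
  - assert (HG : Gin b m s c = 1%C) by (unfold Gin; rewrite E1, E2; ring).
    destruct (IH H) as [c' [Hc' Hc'']]. exists c'. split; auto.
    destruct Hc'' as [[A B]|[A B]]; [left|right]; split; auto; rewrite HG, B; ring.
Qed.

Lemma out_one b m l s : cnt_out l s = 1%nat ->
  exists c, In c l /\
    ((out1 c = s /\ Cprod (map (Gout b m s) l) = a_out1 b m c) \/
     (out2 c = s /\ Cprod (map (Gout b m s) l) = a_out2 b m c)).
Proof.
  induction l as [|c l IH]; simpl; [lia|].
  destruct (seg_eqb (out1 c) s) eqn:E1, (seg_eqb (out2 c) s) eqn:E2; simpl; intro H; try lia.
  - assert (HG : Gout b m s c = a_out1 b m c) by (unfold Gout; rewrite E1, E2; ring).
    exists c. split; auto. left. split; [apply seg_eqb_eq; auto|].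
    rewrite HG, out_zero by lia. ring.
  - assert (HG : Gout b m s c = a_out2 b m c) by (unfold Gout; rewrite E1, E2; ring).
    exists c. split; auto. right. split; [apply seg_eqb_eq; auto|].
    rewrite HG, out_zero by lia. ring.
  - assert (HG : Gout b m s c = 1%C) by (unfold Gout; rewrite E1, E2; ring).
    destruct (IH H) as [c' [Hc' Hc'']]. exists c'. split; auto.
    destruct Hc'' as [[A B]|[A B]]; [left|right]; split; auto; rewrite HG, B; ring.
Qed.

Lemma Cinv_ne0 (x : C) : x <> 0%C -> (/ x)%C <> 0%C.
Proof. intros H E. assert (E' := Cinv_r x H). rewrite E, Cmult_0_r in E'. injection E'. lra. Qed.

Lemma ratio_ne0 (x y z : C) : x <> 0%C -> y <> 0%C -> z <> 0%C -> (x * y / z)%C <> 0%C.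
Proof. intros. unfold Cdiv. apply Cmult_ne0; [apply Cmult_ne0|apply Cinv_ne0]; auto. Qed.

Lemma epow_ne0 e (m : C) : m <> 0%C -> epow e m <> 0%C.
Proof. destruct e; simpl; auto using Cinv_ne0. Qed.

Theorem mainTheorem2 (D : diagram) (N : nat) (mu : C) (b beta : nat -> C) :
  wf_diagram D ->
  (2 <= N)%nat ->
  segment_equations D b (Cexp (twopii * mu)%C) ->
  (forall i, (i < nE D)%nat -> b i <> RtoC 0) ->
  shapes_nondegenerate D b (Cexp (twopii * mu)%C) ->
  (forall i, (i < nE D)%nat -> Cexp (twopii * beta i)%C = b i) ->
  forall n : nat -> Z,
    let pt := fun j => ((beta j + RtoC (IZR (n j))) / RtoC (INR N))%C in
    (exists v, W D N mu pt = Some v) /\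
    (forall i, (i < nE D)%nat ->
       W D N mu (fun j => if Nat.eqb j i then (pt j + RtoC 1)%C else pt j)
       = W D N mu pt).
Proof.
  intros HD HN2 Hseg Hb0 Hnd Hbeta n pt.
  assert (HN : (1 <= N)%nat) by lia.
  destruct HD as [Hval [_ [_ [_ [_ [Hcnt _]]]]]].
  set (m := Cexp (twopii * mu)%C) in *.
  assert (Hm : m <> 0%C) by apply Cexp_ne0.
  assert (Hcr : forall i c, In c (crossings D) ->
     exists v : C, Lambda D N mu pt c = Some v /\
       Lambda D N mu (fun j => if Nat.eqb j i then (pt j + RtoC 1)%C else pt j) c
       = Some (v * Gi b m i c)%C).
  { intros i c Hc. destruct (Hval c Hc) as [V1 [V2 [V3 V4]]].
    apply (cross_shift D N mu b beta n i c); auto. apply Hnd; auto. }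
  split.
  - destruct (fold_omul (crossings D) (Lambda D N mu pt)
       (Lambda D N mu (fun j => if Nat.eqb j 0 then (pt j + RtoC 1)%C else pt j))
       (Gi b m 0) (Hcr 0%nat)) as [P [HP _]].
    exists P. exact HP.
  - intros i Hi.
    destruct (fold_omul (crossings D) (Lambda D N mu pt)
       (Lambda D N mu (fun j => if Nat.eqb j i then (pt j + RtoC 1)%C else pt j))
       (Gi b m i) (Hcr i)) as [P [HP HP']].
    unfold W. rewrite HP, HP'. f_equal.
    assert (Hsplit : Cprod (map (Gi b m i) (crossings D)) =
       (Cprod (map (Gin b m (SInt i)) (crossings D)) * Cprod (map (Gout b m (SInt i)) (crossings D)))%C).
    { rewrite <- Cprod_mul. f_equal. apply map_ext. intro c. unfold Gi, Gin, Gout. ring. }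
    rewrite Hsplit.
    destruct (Hcnt i Hi) as [Ci1 Co1].
    destruct (in_one b m (crossings D) (SInt i) Ci1) as [c0 [Hc0 Hin]].
    destruct (out_one b m (crossings D) (SInt i) Co1) as [c1 [Hc1 Hout]].
    assert (Hz : forall z, In z [zN b c1; zS b c1; zW b m c1; zE b m c1] -> (1 - z)%C <> 0%C).
    { intros z Hz. apply one_minus_ne0. apply (Hnd c1 Hc1 z Hz). }
    assert (ZN := Hz (zN b c1) ltac:(simpl; auto)). assert (ZS := Hz (zS b c1) ltac:(simpl; auto)).
    assert (ZW := Hz (zW b m c1) ltac:(simpl; auto)). assert (ZE := Hz (zE b m c1) ltac:(simpl; auto)).
    assert (Ha1 : a_out1 b m c1 <> 0%C).
    { unfold a_out1; apply ratio_ne0; [apply epow_ne0|..]; auto. }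
    assert (Ha2 : a_out2 b m c1 <> 0%C).
    { unfold a_out2; apply ratio_ne0; [apply epow_ne0|..]; auto. }
    destruct (Hseg c0 c1 Hc0 Hc1) as [S11 [S12 [S21 S22]]].
    destruct Hout as [[Eo Ho]|[Eo Ho]]; rewrite Ho;
    destruct Hin as [[Ei Hi']|[Ei Hi']]; rewrite Hi'.
    + rewrite S11 by (rewrite Ei, Eo; simpl; reflexivity). field; auto.
    + rewrite S21 by (rewrite Ei, Eo; simpl; reflexivity). field; auto.
    + rewrite S12 by (rewrite Ei, Eo; simpl; reflexivity). field; auto.
    + rewrite S22 by (rewrite Ei, Eo; simpl; reflexivity). field; auto.
Qed.
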